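(* Let $\phi$ be an instance of \textsc{Max (2,3)-SAT} with $n$ variables and let $T_\phi$ be the tournament instance constructed from $\phi$ as described in the context. Let $\mathsf{opt}_A(\phi)$ be the maximum number of clauses of $\phi$ satisfied by an assignment and $\mathsf{opt}_B(T_\phi)$ the maximum tournament value of $T_\phi$ over all seedings. Then $\mathsf{opt}_B(T_\phi)=\mathsf{opt}_A(\phi)+n$.
   Context: Tournament model: players form a finite set of size $2^{n'}$ totally ordered by strength (stronger beats weaker). A seeding is a bijection $\sigma$ from players to $[2^{n'}]$. In round $r=1,\dots,n'$, for each block of seed positions $\{(k-1)2^r+1,\dots,k2^r\}$, the winner $a$ of its first half $\{(k-1)2^r+1,\dots,(k-1)2^r+2^{r-1}\}$ plays the winner $b$ of its second half (a single-position block is won by the player seeded there), the stronger one wins the block, and the game has value $v(a,b,r)$. The tournament value is the sum of values of all games played. \textsc{Max (2,3)-SAT} instance: a CNF formula $\phi$ with variables $x_1,\dots,x_n$ and clauses $c_1,\dots,c_m$, each clause having exactly two literals and each variable appearing in at most three clauses; the occurrences of each variable $x$ as a literal are numbered $1,2,3$ (its $j$th appearance) in a fixed order. Construction of $T_\phi$: let $n'$ be the smallest integer with $16n\le 2^{n'}$ and $p=2^{n'}-16n$. Players: for each variable $x$, three variable players $x,x^T,x^F$; for each clause $c$, one clause player $c$; and dummy players $f_1,\dots,f_{13n+p-m}$. Strength order (strongest first): $x_1>x_1^T>x_1^F>x_2>x_2^T>x_2^F>\dots>x_n>x_n^T>x_n^F>c_1>\dots>c_m>f_1>\dots>f_{13n+p-m}$.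 Game values: for each variable $x$, $v(x,x^T,1)=v(x^T,x,1)=v(x,x^F,1)=v(x^F,x,1)=1$; for each clause $c$ and each literal of $c$ that is the $j$th appearance of variable $x$, if $x$ appears non-negated there set $v(c,x^T,j)=v(x^T,c,j)=1$, and otherwise set $v(c,x^F,j)=v(x^F,c,j)=1$; all other values $v(a,b,r)$ for $r\in[n']$ are $0$. *)

(* Defs.v *)
From mathcomp Require Import all_boot.
Set Implicit Arguments.
Unset Strict Implicit.
Unset Printing Implicit Defensive.

(* Players of type P, strength given by an injective rank function     *)
(* (smaller rank = stronger player). A seeding is described by the     *)
(* list of players in seed-position order 1, 2, ..., 2^nr (i.e. the    *)
(* inverse sigma^-1 of the bijection sigma : players -> [2^nr]).       *)
(* Round r pairs consecutive winners of the blocks of size 2^(r-1):    *)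
(* the winner a of the first half of a block of size 2^r plays the     *)
(* winner b of its second half, the game has value v a b r.            *)
Section Tournament.
Variable P : Type.
Variable rank : P -> nat.
Variable v : P -> P -> nat -> nat.

Definition stronger (a b : P) : P := if rank a <= rank b then a else b.

Fixpoint pairs (l : seq P) : seq (P * P) :=
  match l with
  | a :: b :: t => (a, b) :: pairs t
  | _ => [::]
  end.

Definition round_winners (l : seq P) : seq P :=
  [seq stronger pq.1 pq.2 | pq <- pairs l].

Definition round_value (r : nat) (l : seq P) : nat :=
  \sum_(pq <- pairs l) v pq.1 pq.2 r.

(* value of the rounds r, r+1, ..., r+k-1 starting from the list l of
   winners of round r-1 *)
Fixpoint tourn_value_from (k r : nat) (l : seq P) : nat :=
  match k with
  | 0 => 0
  | k'.+1 => round_value r l + tourn_value_from k' r.+1 (round_winners l)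
  end.

Definition tourn_value (nr : nat) (l : seq P) : nat := tourn_value_from nr 1 l.
End Tournament.

Definition opt_tourn (P : finType) (rank : P -> nat) (v : P -> P -> nat -> nat)
  (nr : nat) : nat :=
  \max_(s : {ffun 'I_(2 ^ nr) -> P} | injectiveb s)
     tourn_value rank v nr [seq s i | i <- enum 'I_(2 ^ nr)].

(* Variables are 'I_n, clauses 'I_m; clause c has exactly two literals *)
(* phi c 0, phi c 1, a literal being (variable, true) for x and        *)
(* (variable, false) for its negation. occ c k is the number j of the  *)
(* occurrence (c,k) among the occurrences of its variable.             *)
Section SAT.
Variables (n m : nat) (phi : 'I_m -> 'I_2 -> 'I_n * bool)
          (occ : 'I_m -> 'I_2 -> nat).

Definition occurrences (x : 'I_n) : {set 'I_m * 'I_2} :=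
  [set o | (phi o.1 o.2).1 == x].

Definition max23sat_instance : Prop :=
  forall x : 'I_n,
    [/\ #|occurrences x| <= 3,
        {in occurrences x &, injective (fun o => occ o.1 o.2)} &
        {in occurrences x, forall o, 1 <= occ o.1 o.2 <= #|occurrences x|}].

Definition clause_sat (a : {ffun 'I_n -> bool}) (c : 'I_m) : bool :=
  [exists k : 'I_2, a (phi c k).1 == (phi c k).2].

Definition opt_A : nat :=
  \max_(a : {ffun 'I_n -> bool}) #|[set c | clause_sat a c]|.
End SAT.

Lemma nprime_ex (n : nat) : exists k, 16 * n <= 2 ^ k.
Proof. exists (16 * n); apply: ltnW; exact: ltn_expl. Qed.

Definition nprime (n : nat) : nat := ex_minn (nprime_ex n).

Definition padding (n : nat) : nat := 2 ^ nprime n - 16 * n.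

Definition ndummies (n m : nat) : nat := 13 * n + padding n - m.

(* players: inl (x, 0) = x, inl (x, 1) = x^T, inl (x, 2) = x^F,
   inr (inl c) = clause player c, inr (inr i) = dummy f_(i+1) *)
Definition Tplayer (n m : nat) : finType :=
  (('I_n * 'I_3) + ('I_m + 'I_(ndummies n m)))%type.

Definition Trank (n m : nat) (p : Tplayer n m) : nat :=
  match p with
  | inl (x, t) => 3 * x + t
  | inr (inl c) => 3 * n + c
  | inr (inr f) => 3 * n + m + f
  end.

Section Values.
Variables (n m : nat) (phi : 'I_m -> 'I_2 -> 'I_n * bool)
          (occ : 'I_m -> 'I_2 -> nat).

Definition Tvdir (a b : Tplayer n m) (r : nat) : bool :=
  match a, b with
  | inl (x, t), inl (y, u) =>
      [&& x == y, nat_of_ord t == 0, nat_of_ord u != 0 & r == 1]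
  | inl (x, t), inr (inl c) =>
      (nat_of_ord t != 0) &&
      [exists k : 'I_2, (phi c k == (x, nat_of_ord t == 1)) && (occ c k == r)]
  | _, _ => false
  end.

Definition Tvalue (a b : Tplayer n m) (r : nat) : nat :=
  Tvdir a b r || Tvdir b a r.

Definition opt_B : nat := opt_tourn (@Trank n m) Tvalue (nprime n).
End Values.

(* Main.v *)
Require Import Defs.
From mathcomp Require Import all_boot zify.
Set Implicit Arguments.
Unset Strict Implicit.
Unset Printing Implicit Defensive.

Section Gen.
Variables (P : finType) (rank : P -> nat) (v : P -> P -> nat -> nat).

Lemma pairs_ind_gen (Q : seq P -> Prop) :
  Q [::] -> (forall a, Q [:: a]) -> (forall a b t, Q t -> Q [:: a, b & t]) ->
  forall l, Q l.
Proof.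
move=> H0 H1 H2 l; have [k] := ubnP (size l); elim: k l => // k IH [|a [|b t]] //= Hs.
apply: H2; apply: IH; rewrite /= in Hs; lia.
Qed.

Lemma size_pairs (l : seq P) : size (pairs l) = (size l)./2.
Proof. by elim/pairs_ind_gen: l => [|a|a b t /= ->]. Qed.

Lemma pairs_cat (l1 l2 : seq P) : ~~ odd (size l1) ->
  pairs (l1 ++ l2) = pairs l1 ++ pairs l2.
Proof.
elim/pairs_ind_gen: l1 => [|a|a b t IH] //=.
by rewrite negbK => Ho; rewrite IH.
Qed.

Lemma size_rw (l : seq P) : size (round_winners rank l) = (size l)./2.
Proof. by rewrite size_map size_pairs. Qed.

Lemma rw_cat (l1 l2 : seq P) : ~~ odd (size l1) ->
  round_winners rank (l1 ++ l2) = round_winners rank l1 ++ round_winners rank l2.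
Proof. by move=> H; rewrite /round_winners pairs_cat // map_cat. Qed.

Lemma rv_cat r (l1 l2 : seq P) : ~~ odd (size l1) ->
  round_value v r (l1 ++ l2) = round_value v r l1 + round_value v r l2.
Proof. by move=> H; rewrite /round_value pairs_cat // big_cat. Qed.

Lemma tv_cat k r (l1 l2 : seq P) : 2 ^ k %| size l1 ->
  tourn_value_from rank v k r (l1 ++ l2) =
  tourn_value_from rank v k r l1 + tourn_value_from rank v k r l2.
Proof.
elim: k r l1 l2 => //= k IH r l1 l2 /dvdnP [q Hq].
have Hodd : ~~ odd (size l1) by rewrite Hq expnS mulnCA oddM.
rewrite rv_cat // rw_cat // IH; first by rewrite addnACA.
rewrite size_rw Hq expnS mulnCA mul2n doubleK; exact: dvdn_mull.
Qed.

Lemma tv_split a b r (l : seq P) :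
  tourn_value_from rank v (a + b) r l =
  tourn_value_from rank v a r l +
  tourn_value_from rank v b (r + a) (iter a (round_winners rank) l).
Proof.
elim: a r l => [|a IH] r l /=; first by rewrite addn0.
by rewrite IH addnA -iterSr addSnnS.
Qed.

Lemma tv_flatten r (bs : seq (seq P)) : all (fun b => size b == 8) bs ->
  tourn_value_from rank v 3 r (flatten bs) =
  \sum_(b <- bs) tourn_value_from rank v 3 r b.
Proof.
elim: bs => [|b bs IH]. 
  by move=> _ /=; rewrite /round_value /= !big_nil.
move=> /andP [/eqP Hb Hall].
by rewrite (_ : flatten (b :: bs) = b ++ flatten bs) // tv_cat ?Hb // IH // big_cons.
Qed.

Lemma tv_sum k r (l : seq P) :
  tourn_value_from rank v k r l =
  \sum_(i < k) round_value v (r + i) (iter i (round_winners rank) l).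
Proof.
elim: k r l => [|k IH] r l /=; first by rewrite big_ord0.
rewrite big_ord_recl addn0 IH; congr (_ + _); apply: eq_bigr => i _.
have -> : r + bump 0 i = r.+1 + i by rewrite /bump; lia.
by rewrite -iterSr iterS.
Qed.

End Gen.

Section Sums.
Lemma sum_le1 (I : finType) (b : I -> bool) :
  (forall i j, b i -> b j -> i = j) -> \sum_i (b i : nat) <= 1.
Proof.
move=> H; case: (pickP b) => [i0 Hi0|Hn].
  rewrite (bigD1 i0) //= Hi0 big1 // => j Hj; case Hbj: (b j) => //.
  by rewrite (H _ _ Hi0 Hbj) eqxx in Hj.
by rewrite big1 // => i _; rewrite Hn.
Qed.

Lemma sum_le1_seq (T : eqType) (s : seq T) (b : T -> bool) : uniq s ->
  (forall i j, i \in s -> j \in s -> b i -> b j -> i = j) ->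
  \sum_(i <- s) (b i : nat) <= 1.
Proof.
elim: s => [|a s IH]; first by rewrite big_nil.
rewrite big_cons /= => /andP [Ha Hu] H.
have Hs : forall x, x \in s -> x \in a :: s by move=> x Hx; rewrite inE Hx orbT.
case Hba: (b a) => /=.
  rewrite big1_seq // => i /andP [Hbi Hi]; move: Hbi.
  case Hb: (b i) => //= _; have E := H _ _ (mem_head a s) (Hs _ Hi) Hba Hb.
  by rewrite E Hi in Ha.
apply: IH => // i j Hi Hj; apply: H; exact: Hs.
Qed.

Lemma sum_pick (I : finType) (c : I -> nat) j : c j <= \sum_i c i.
Proof. by rewrite (bigD1 j) //= leq_addr. Qed.

Lemma sum_cover (I J : finType) (f : I -> nat) (c : J -> I -> nat) :
  (forall i, f i <= \sum_j c j i) -> \sum_i f i <= \sum_j \sum_i c j i.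
Proof. by move=> H; rewrite exchange_big /=; apply: leq_sum => i _. Qed.
End Sums.

Section Lists.
Variables (P : finType) (rank : P -> nat).

Lemma pairs_mem (l : seq P) p : p \in pairs l -> (p.1 \in l) && (p.2 \in l).
Proof.
elim/pairs_ind_gen: l => [|a|a b t IH] //=.
rewrite inE => /orP [/eqP -> | /IH /andP [H1 H2]]; first by rewrite !inE !eqxx orbT.
by rewrite !inE H1 H2 !orbT.
Qed.

Lemma uniq_pairs (l : seq P) : uniq l -> uniq (pairs l).
Proof.
elim/pairs_ind_gen: l => [|a|a b t IH] //= /andP [Ha /andP [Hb Hu]].
rewrite IH // andbT; apply/negP => /pairs_mem /= /andP [H1 _].
by move: Ha; rewrite inE H1 orbT.
Qed.

Lemma pairs_share (l : seq P) p q w : uniq l -> p \in pairs l -> q \in pairs l ->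
  w \in [:: p.1; p.2] -> w \in [:: q.1; q.2] -> p = q.
Proof.
elim/pairs_ind_gen: l => [|a|a b t IH] //= /andP [Ha /andP [Hb Hu]].
have Hnt : forall r, r \in pairs t -> w \in [:: r.1; r.2] -> (w != a) && (w != b).
  move=> r /pairs_mem /andP [H1 H2]; rewrite !inE => /orP [] /eqP ->.
    by apply/andP; split; apply/eqP => E; subst; [move: Ha; rewrite inE H1 orbT | move: Hb; rewrite H1].
  by apply/andP; split; apply/eqP => E; subst; [move: Ha; rewrite inE H2 orbT | move: Hb; rewrite H2].
move=> Hp Hq Hw1 Hw2; move: Hp Hq; rewrite !inE => /orP [/eqP Hp | Hp] /orP [/eqP Hq | Hq].
- by rewrite Hp Hq.
- have /andP [Ha' Hb'] := Hnt _ Hq Hw2; move: Hw1; subst p.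
  by rewrite !inE (negbTE Ha') (negbTE Hb').
- have /andP [Ha' Hb'] := Hnt _ Hp Hw1; move: Hw2; subst q.
  by rewrite !inE (negbTE Ha') (negbTE Hb').
- exact: IH.
Qed.

Definition inpairL (l : seq P) a b := ((a, b) \in pairs l) || ((b, a) \in pairs l).

Lemma inpairC l a b : inpairL l a b = inpairL l b a.
Proof. by rewrite /inpairL orbC. Qed.

Lemma inpair_mem l a b : inpairL l a b -> a \in l.
Proof. by case/orP => /pairs_mem /andP []. Qed.

Lemma inpair_uniq l a b c : uniq l -> inpairL l a b -> inpairL l a c -> b = c.
Proof.
move=> Hu Hb Hc.
have E : forall p q, p \in pairs l -> q \in pairs l -> a \in [:: p.1; p.2] ->
   a \in [:: q.1; q.2] -> p = q by move=> p q; exact: pairs_share.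
by case/orP: Hb => Hb; case/orP: Hc => Hc;
  have := E _ _ Hb Hc; rewrite /= !inE eqxx ?orbT => /(_ isT isT) [] *; congruence.
Qed.

Lemma rw_mem (l : seq P) x : x \in round_winners rank l -> x \in l.
Proof.
case/mapP => p /pairs_mem /andP [H1 H2] ->; rewrite /stronger; by case: ifP.
Qed.

Lemma rw_uniq (l : seq P) : uniq l -> uniq (round_winners rank l).
Proof.
elim/pairs_ind_gen: l => [|a|a b t IH] //= /andP [Ha /andP [Hb Hu]].
rewrite IH // andbT; apply/negP => /rw_mem Ht.
move: Ha Hb; rewrite inE negb_or => /andP [_ Ha] Hb.
by move: Ht; rewrite /stronger; case: ifP => _ Ht; [rewrite Ht in Ha | rewrite Ht in Hb].
Qed.

Lemma loser_out (l : seq P) W V : uniq l -> inpairL l W V -> rank V < rank W ->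
  W \notin round_winners rank l.
Proof.
move=> Hu Hp Hr; apply/negP => /mapP [q Hq Eq].
have Hw : W \in [:: q.1; q.2].
  by move: Eq; rewrite /stronger; case: ifP => _ ->; rewrite !inE eqxx ?orbT.
case/orP: Hp => Hp.
- have Hw0 : W \in [:: (W,V).1; (W,V).2] by rewrite !inE eqxx.
  have E := pairs_share Hu Hp Hq Hw0 Hw; subst q.
  by move: Eq; rewrite /stronger /= leqNgt Hr /= => E; rewrite -E ltnn in Hr.
- have Hw0 : W \in [:: (V,W).1; (V,W).2] by rewrite !inE eqxx orbT.
  have E := pairs_share Hu Hp Hq Hw0 Hw; subst q.
  by move: Eq; rewrite /stronger /= ltnW //= => E; rewrite -E ltnn in Hr.
Qed.

Definition Wl (l : seq P) k := iter k (round_winners rank) l.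

Lemma Wl_uniq l k : uniq l -> uniq (Wl l k).
Proof. by move=> Hu; elim: k => //= k IH; exact: rw_uniq. Qed.

Lemma Wl_sub l k k' x : k <= k' -> x \in Wl l k' -> x \in Wl l k.
Proof.
move=> /subnK <-; elim: (k' - k) => // d IH /= H; apply: IH; exact: rw_mem H.
Qed.

Lemma lost_once l k k' W V V' : uniq l -> inpairL (Wl l k) W V ->
  rank V < rank W -> inpairL (Wl l k') W V' -> k' <= k /\ (k' = k -> V' = V).
Proof.
move=> Hu Hk Hr Hk'; split; last first.
  move=> E; subst k'; apply: (inpair_uniq (Wl_uniq k Hu) Hk' Hk).
rewrite leqNgt; apply/negP => Hlt.
have := loser_out (Wl_uniq k Hu) Hk Hr.
by rewrite (Wl_sub Hlt (inpair_mem Hk')).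
Qed.

Variable v : P -> P -> nat -> nat.
Hypothesis v01 : forall a b r, v a b r <= 1.
Hypothesis vsym : forall a b r, v a b r = v b a r.
Hypothesis vne : forall a b r, 0 < v a b r -> rank a != rank b.

Lemma rv_le (l : seq P) r : uniq l ->
  round_value v r l <=
  \sum_W ([exists V, inpairL l W V && (rank V < rank W) && (0 < v W V r)] : nat).
Proof.
move=> Hu; pose lost (W : P) := [exists V, inpairL l W V && (rank V < rank W) && (0 < v W V r)].
change (round_value v r l <= \sum_W (lost W : nat)).
pose g (p : P * P) := if rank p.1 < rank p.2 then p.2 else p.1.
apply: (@leq_trans (\sum_(p <- pairs l) \sum_W ((W == g p) && lost W : nat))).
  rewrite /round_value [X in X <= _]big_seq [X in _ <= X]big_seq.
  apply: leq_sum => -[a b] Hp /=.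
  case Hv: (v a b r) => [|k] //.
  have Hk : k = 0 by move: (v01 a b r); rewrite Hv; case: k {Hv}.
  subst k; apply: leq_trans (sum_pick _ (g (a, b))); rewrite eqxx /=.
  have Hne : rank a != rank b by apply: (vne (r := r)); rewrite Hv.
  rewrite /lost lt0b; apply/existsP; rewrite /g /=; case: ltnP => Hlt.
  - by exists a; rewrite /inpairL Hp orbT Hlt -vsym Hv.
  - have Hlt' : rank b < rank a by rewrite ltn_neqAle Hlt eq_sym Hne.
    by exists b; rewrite /inpairL Hp Hlt' Hv.
rewrite exchange_big /=; apply: leq_sum => W _.
case HW: (lost W); last by rewrite big1_seq // => p _; rewrite andbF.
under eq_bigr do rewrite andbT.
apply: sum_le1_seq; first exact: uniq_pairs.
move=> p q Hp Hq /eqP Ep /eqP Eq.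
apply: (pairs_share Hu Hp Hq (w := W)).
  by rewrite Ep /g; case: ifP => _; rewrite !inE eqxx ?orbT.
by rewrite Eq /g; case: ifP => _; rewrite !inE eqxx ?orbT.
Qed.

End Lists.

Section Spec.
Variables (n m : nat) (phi : 'I_m -> 'I_2 -> 'I_n * bool) (occ : 'I_m -> 'I_2 -> nat).
Hypothesis inst : max23sat_instance phi occ.

Local Notation P := (Tplayer n m).
Local Notation rank := (@Trank n m).
Local Notation v := (Tvalue phi occ).

Definition o1 : 'I_3 := @Ordinal 3 1 isT.
Definition o2 : 'I_3 := @Ordinal 3 2 isT.
Definition xv (x : 'I_n) : P := inl (x, ord0).
Definition xT (x : 'I_n) : P := inl (x, o1).
Definition xF (x : 'I_n) : P := inl (x, o2).
Definition cl (c : 'I_m) : P := inr (inl c).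

Lemma occ_bounds c kk x b : phi c kk = (x, b) -> 1 <= occ c kk <= 3.
Proof.
move=> E; have [H3 _ H] := inst x.
have Hin : (c, kk) \in occurrences phi x by rewrite inE /= E.
by have /andP [H1 H2] := H _ Hin; rewrite H1 /= (leq_trans H2 H3).
Qed.

Lemma occ_inj c kk c' kk' x b b' : phi c kk = (x, b) -> phi c' kk' = (x, b') ->
  occ c kk = occ c' kk' -> (c, kk) = (c', kk').
Proof.
move=> E E' Eo; have [_ H _] := inst x.
by apply: H => //; rewrite inE /= ?E ?E'.
Qed.

Lemma v01 a b r : v a b r <= 1.
Proof. exact: leq_b1. Qed.

Lemma vsym a b r : v a b r = v b a r.
Proof. by rewrite /Tvalue orbC. Qed.

Lemma rank_lt_var (x : 'I_n) (t : 'I_3) : 3 * x + t < 3 * n.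
Proof. have := ltn_ord x; have := ltn_ord t; lia. Qed.

Lemma vne a b r : 0 < v a b r -> rank a != rank b.
Proof.
rewrite /Tvalue lt0b.
case: a => [[x t]|[c|d]]; case: b => [[y u]|[c'|d']] //=;
  rewrite ?orbF ?andbF //=.
- case/orP => /and4P [/eqP Exy /eqP Et Hu _]; subst y;
    by apply/negP => /eqP; move: Hu; rewrite ?Et; lia.
- move=> _; apply/eqP; have := rank_lt_var x t; lia.
- move=> _; apply/eqP; have := rank_lt_var y u; lia.
Qed.

Lemma classify W V r : 0 < v W V r -> rank V < rank W ->
  (exists x, V = xv x /\ (W = xT x \/ W = xF x) /\ r = 1) \/
  (exists x c kk, W = cl c /\ occ c kk = r /\
     ((V = xT x /\ phi c kk = (x, true)) \/ (V = xF x /\ phi c kk = (x, false)))).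
Proof.
rewrite /Tvalue lt0b.
case: W => [[x t]|[c|d]]; case: V => [[y u]|[c'|d']] //=;
  rewrite ?orbF ?andbF //=.
- case/orP => /and4P [/eqP Exy /eqP Et Hu /eqP Er]; subst y.
    by rewrite Et; lia.
  left; exists x; split; first by congr inl; congr pair; apply: val_inj.
  split=> //; have := ltn_ord t; move: Hu; rewrite /xT /xF; clear H.
  case: t => [[|[|[|t]]] Ht] //= _ _; [left|right]; congr inl; congr pair; exact: val_inj.
- move=> _ H; exfalso; have := rank_lt_var x t; lia.
- case/andP => Hu /existsP [kk /andP [/eqP Ephi /eqP Eo]] _.
  right; exists y, c, kk; split=> //; split=> //.
  have := ltn_ord u; move: Hu Ephi; rewrite /xT /xF.
  case: u => [[|[|[|u]]] Hu] //= _ Ephi _; [left|right]; split=> //;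
    congr inl; congr pair; exact: val_inj.
Qed.

Variables (nr : nat) (l : seq P).
Hypothesis Hu : uniq l.

Local Notation Wk k := (Wl rank l k).

Definition beats V W := [exists k : 'I_nr,
  inpairL (Wk k) W V && (rank V < rank W) && (0 < v W V k.+1)].
Definition inU W := [exists V, beats V W].

Lemma beatsP V W : beats V W -> exists k : 'I_nr,
  [/\ inpairL (Wk k) W V, rank V < rank W & 0 < v W V k.+1].
Proof. by case/existsP => k /andP [/andP [H1 H2] H3]; exists k. Qed.

Lemma beats_uniq V V' W : beats V W -> beats V' W -> V = V'.
Proof.
case/beatsP => k [H1 H2 H3]; case/beatsP => k' [H1' H2' H3'].
have [Hle _] := lost_once Hu H1 H2 H1'.
have [Hle' E] := lost_once Hu H1' H2' H1.
by apply: E; apply/eqP; rewrite eqn_leq Hle Hle'.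
Qed.

Lemma value_le_U : tourn_value rank v nr l <= \sum_W (inU W : nat).
Proof.
rewrite /tourn_value tv_sum.
apply: (@leq_trans (\sum_(i < nr) \sum_W
   ([exists V, inpairL (Wk i) W V && (rank V < rank W) && (0 < v W V i.+1)] : nat))).
  apply: leq_sum => i _; rewrite add1n; apply: rv_le.
  - exact: v01.
  - exact: vsym.
  - exact: vne.
  - exact: Wl_uniq.
rewrite exchange_big /=; apply: leq_sum => W _.
case HW: (inU W).
  apply: sum_le1 => i j /existsP [V /andP [/andP [H1 H2] _]] /existsP [V' /andP [/andP [H1' H2'] _]].
  have [Hle _] := lost_once Hu H1 H2 H1'.
  have [Hle' _] := lost_once Hu H1' H2' H1.
  by apply: val_inj; apply/eqP; rewrite eqn_leq Hle Hle'.
rewrite big1 // => i _; case: existsP => // -[V HV]; exfalso.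
have : inU W by apply/existsP; exists V; apply/existsP; exists i.
by rewrite HW.
Qed.


Lemma beats_lit x (t : 'I_3) W : (t : nat) != 0 -> beats (inl (x, t)) W ->
  exists c kk (k : 'I_nr), [/\ W = cl c, phi c kk = (x, (t : nat) == 1),
    occ c kk = k.+1, inpairL (Wk k) W (inl (x, t)) &
    (rank (inl (x, t)) < rank W) /\ 0 < v W (inl (x, t)) k.+1].
Proof.
move=> Ht /beatsP [k [H1 H2 H3]].
case: (classify H3 H2) => [[y [E _]] | [y [c [kk [EW [Eo Hl]]]]]].
  by case: E => _ Et; rewrite Et in Ht.
exists c, kk, k; split=> //.
by case: Hl => -[E Ep]; case: E => Ex Et; rewrite Ep Ex Et.
Qed.

Lemma inU_var x t : inU (inl (x, t)) ->
  inpairL (Wk 0) (inl (x, t)) (xv x) /\ rank (xv x) < rank (inl (x, t)).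
Proof.
case/existsP => V /beatsP [k [H1 H2 H3]].
case: (classify H3 H2) => [[y [EV [EW Er]]] | [y [c [kk [EW _]]]]] //.
have Ey : y = x by case: EW => -[] ->.
subst y V; have Ek : (k : nat) = 0 by case: Er.
have -> : Wk 0 = Wk k by rewrite Ek.
by [].
Qed.

Lemma inU_nobeat x t W : inU (inl (x, t)) -> beats (inl (x, t)) W -> False.
Proof.
move=> /inU_var [H0 Hr0] /beatsP [k' [H1 H2 H3]].
rewrite inpairC in H1.
have [Hle E] := lost_once Hu H0 Hr0 H1.
have Ek : (k' : nat) = 0 by move: Hle; rewrite leqn0 => /eqP.
by move: H2; rewrite (E Ek) /=; lia.
Qed.

Lemma inU_TF x : inU (xT x) -> inU (xF x) -> False.
Proof.
move=> /inU_var [H0 _] /inU_var [H0' _].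
rewrite inpairC in H0; rewrite inpairC in H0'.
by have := inpair_uniq (Wl_uniq rank 0 Hu) H0 H0'.
Qed.

Lemma TF_le3 x : \sum_W ((beats (xT x) W : nat) + beats (xF x) W) <= 3.
Proof.
pose R (j : 'I_3) W := [exists V, ((V == xT x) || (V == xF x)) &&
   inpairL (Wk j) W V && (rank V < rank W) && (0 < v W V j.+1)].
apply: (@leq_trans (\sum_(j < 3) \sum_W (R j W : nat))).
  apply: sum_cover => W.
  have cov : forall t : 'I_3, (t : nat) != 0 -> (t == o1) || (t == o2) ->
      beats (inl (x, t)) W -> 1 <= \sum_j (R j W : nat).
    move=> t Ht Hto /(beats_lit Ht) [c [kk [k [EW Ep Eo H1 [H2 H3]]]]].
    have /andP [_ Hk3] := occ_bounds Ep; rewrite Eo in Hk3.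
    apply: leq_trans (sum_pick _ (Ordinal Hk3)).
    rewrite lt0b; apply/existsP; exists (inl (x, t)); rewrite /= H1 H2 H3.
    by case/orP: Hto => /eqP ->; rewrite eqxx ?orbT.
  case HT: (beats (xT x) W); case HF: (beats (xF x) W) => //=.
  - by have := beats_uniq HT HF.
  - by rewrite addn0; apply: (cov o1) => //; rewrite eqxx.
  - by rewrite add0n; apply: (cov o2) => //; rewrite eqxx orbT.
apply: (@leq_trans (\sum_(j < 3) 1)); last by rewrite sum_nat_const card_ord.
apply: leq_sum => j _; apply: sum_le1 => W W'.
move=> /existsP [V /andP [/andP [/andP [HV H1] H2] H3]].
move=> /existsP [V' /andP [/andP [/andP [HV' H1'] H2'] H3']].
have Hu' := Wl_uniq rank j Hu.
have same : V = V' -> W = W'.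
  move=> E; subst V'; rewrite inpairC in H1; rewrite inpairC in H1'.
  exact: inpair_uniq Hu' H1 H1'.
case/orP: HV => /eqP EV; case/orP: HV' => /eqP EV'; subst V V'; try exact: same.
- case: (classify H3 H2) => [[y [E _]] | [y [c [kk [EW [Eo Hl]]]]]] //.
  case: (classify H3' H2') => [[y' [E' _]] | [y' [c' [kk' [EW' [Eo' Hl']]]]]] //.
  case: Hl => -[E Ep] //; case: E => Ey; subst y.
  case: Hl' => -[E' Ep'] //; case: E' => Ey; subst y'.
  have := occ_inj Ep Ep' (etrans Eo (esym Eo')); case=> Ec Ek; subst c kk.
  by rewrite Ep in Ep'.
- case: (classify H3 H2) => [[y [E _]] | [y [c [kk [EW [Eo Hl]]]]]] //.
  case: (classify H3' H2') => [[y' [E' _]] | [y' [c' [kk' [EW' [Eo' Hl']]]]]] //.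
  case: Hl => -[E Ep] //; case: E => Ey; subst y.
  case: Hl' => -[E' Ep'] //; case: E' => Ey; subst y'.
  have := occ_inj Ep Ep' (etrans Eo (esym Eo')); case=> Ec Ek; subst c kk.
  by rewrite Ep in Ep'.
Qed.


Definition cT x := \sum_W (beats (xT x) W : nat).
Definition cF x := \sum_W (beats (xF x) W : nat).
Definition astar : {ffun 'I_n -> bool} :=
  [ffun x => if inU (xT x) then false else if inU (xF x) then true else cF x <= 1].
Definition lit x := if astar x then xT x else xF x.
Definition cA x := \sum_W (beats (lit x) W : nat).

Lemma S2 x : (inU (xT x) : nat) + inU (xF x) + cT x + cF x <= 1 + cA x.
Proof.
have B4 := TF_le3 x; rewrite big_split /= -/(cT x) -/(cF x) in B4.
rewrite /cA /lit ffunE.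
case HT: (inU (xT x)).
  have -> : inU (xF x) = false by case HF: (inU (xF x)) => //; exfalso; exact: (inU_TF HT HF).
  have -> : cT x = 0 by rewrite /cT big1 // => W _; case Hb: (beats _ _) => //; have := inU_nobeat HT Hb.
  by rewrite -/(cF x).
case HF: (inU (xF x)).
  have -> : cF x = 0 by rewrite /cF big1 // => W _; case Hb: (beats _ _) => //; have := inU_nobeat HF Hb.
  by rewrite -/(cT x) /=; lia.
case: ifP => H; rewrite -?/(cT x) -?/(cF x) /=; lia.
Qed.

Lemma sum_eq_and (I : finType) (a : I) (B : bool) : \sum_(W : I) ((W == a) && B : nat) = B.
Proof. by rewrite (bigD1 a) //= eqxx big1 ?addn0 // => W /negbTE ->. Qed.

Lemma S1 : \sum_W (inU W : nat) <= \sum_x ((inU (xT x) : nat) + inU (xF x) + cT x + cF x).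
Proof.
pose cx x W := ((W == xT x) && inU (xT x) : nat) + ((W == xF x) && inU (xF x) : nat)
   + (beats (xT x) W : nat) + (beats (xF x) W : nat).
apply: (@leq_trans (\sum_x \sum_W cx x W)).
  apply: sum_cover => W; case HW: (inU W) => //.
  case/existsP: (HW) => V /beatsP [k [H1 H2 H3]].
  case: (classify H3 H2) => [[y [EV [[EW|EW] Er]]] | [y [c [kk [EW [Eo [[EV _]|[EV _]]]]]]]];
    apply: leq_trans (sum_pick _ y); rewrite /cx.
  - by rewrite -EW eqxx HW /= -!addnA leq_addr.
  - by rewrite -EW eqxx HW /= addn1 -addnA addSn.
  - have -> : beats (xT y) W by apply/existsP; exists k; rewrite -EV H1 H2 H3.
    by rewrite /=; lia.
  - have -> : beats (xF y) W by apply/existsP; exists k; rewrite -EV H1 H2 H3.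
    by rewrite /=; lia.
apply: leq_sum => x _; rewrite /cx !big_split /= !sum_eq_and.
by [].
Qed.

Lemma S3 : \sum_x cA x <= #|[set c | clause_sat phi astar c]|.
Proof.
pose satW (W : P) := if W is inr (inl c) then clause_sat phi astar c else false.
apply: (@leq_trans (\sum_W (satW W : nat))).
  rewrite /cA exchange_big; apply: leq_sum => W _.
  have Hsat : forall x, beats (lit x) W -> satW W.
    move=> x; rewrite /lit; case Ha: (astar x).
    + move/(@beats_lit x o1 W isT) => [c [kk [k [EW Ep _ _ _]]]]; subst W.
      by apply/existsP; exists kk; rewrite Ep /= Ha.
    + move/(@beats_lit x o2 W isT) => [c [kk [k [EW Ep _ _ _]]]]; subst W.
      by apply/existsP; exists kk; rewrite Ep /= Ha.
  case HS: (satW W).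
    apply: sum_le1 => x y Hx Hy; have E := beats_uniq Hx Hy.
    by move: E; rewrite /lit; case: (astar x); case: (astar y); case.
  rewrite big1 // => x _; case Hb: (beats _ _) => //; by rewrite (Hsat _ Hb) in HS.
rewrite big_sumType.
change (\sum_i (satW (inl i) : nat) + \sum_i (satW (inr i) : nat) <= #|[set c | clause_sat phi astar c]|).
rewrite big1 // add0n big_sumType.
change (\sum_i (satW (inr (inl i)) : nat) + \sum_i (satW (inr (inr i)) : nat) <= #|[set c | clause_sat phi astar c]|).
rewrite [X in _ + X]big1 // addn0.
rewrite -sum1_card [X in _ <= X]big_mkcond; apply: leq_sum => c _; rewrite inE /=; by case: (clause_sat _ _ _).
Qed.

Lemma upper : tourn_value rank v nr l <= opt_A phi + n.
Proof.
apply: leq_trans value_le_U _; apply: leq_trans S1 _.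
apply: (@leq_trans (\sum_x (1 + cA x))); first by apply: leq_sum => x _; exact: S2.
rewrite big_split /= sum_nat_const card_ord muln1 addnC leq_add2r.
apply: leq_trans S3 _; exact: (leq_bigmax astar).
Qed.

End Spec.

Lemma blk_val (P : finType) (rank : P -> nat) (v : P -> P -> nat -> nat)
  (L a1 a2 b0 a3 b1 b2 b3 : P) :
  rank L <= rank a1 -> rank L <= rank a2 -> rank L <= rank b0 ->
  v L a1 1 + v L (stronger rank a2 b0) 2 +
  v L (stronger rank (stronger rank a3 b1) (stronger rank b2 b3)) 3 <=
  tourn_value_from rank v 3 1 [:: L; a1; a2; b0; a3; b1; b2; b3].
Proof.
move=> H1 H2 H3.
have E1 : stronger rank L a1 = L by rewrite /stronger H1.
have E2 : stronger rank L (stronger rank a2 b0) = L.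
  by rewrite {2}/stronger; case: ifP => _; rewrite /stronger ?H2 ?H3.
rewrite /= /round_value /round_winners /= !big_cons !big_nil /= E1 E2; lia.
Qed.

Lemma flat_iota (k s N : nat) :
  flatten [seq iota (s + k * i) k | i <- iota 0 N] = iota s (k * N).
Proof.
elim: N => [|N IH]; first by rewrite muln0.
rewrite -addn1 iotaD map_cat flatten_cat IH /= cats0.
by rewrite add0n mulnDr muln1 iotaD.
Qed.

Lemma sum_seq_le (T : eqType) (s : seq T) (F : T -> nat) : (forall x, 1 <= F x) -> size s <= \sum_(x <- s) F x.
Proof.
move=> H; elim: s => [|x s IH]; first by rewrite big_nil.
rewrite big_cons /=; have := H x; lia.
Qed.

Lemma pairs_flat2 (T : Type) (I : Type) (f g : I -> T) (s : seq I) :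
  pairs (flatten [seq [:: f i; g i] | i <- s]) = [seq (f i, g i) | i <- s].
Proof. by elim: s => //= i s ->. Qed.

Lemma np16 n : 16 * n <= 2 ^ nprime n.
Proof. by rewrite /nprime; case: ex_minnP. Qed.

Lemma np3 n : 0 < n -> 3 <= nprime n.
Proof.
move=> Hn; have := np16 n; case: (nprime n) => [|[|[|k]]] //; rewrite ?expn0 ?expn1; lia.
Qed.

Section Counting.
Variables (n m : nat) (phi : 'I_m -> 'I_2 -> 'I_n * bool) (occ : 'I_m -> 'I_2 -> nat).
Hypothesis inst : max23sat_instance phi occ.

Lemma m_le : 2 * m <= 3 * n.
Proof.
have -> : 2 * m = \sum_(o : 'I_m * 'I_2) 1 by rewrite sum1_card card_prod !card_ord mulnC.
have -> : \sum_(o : 'I_m * 'I_2) 1 = \sum_(o : 'I_m * 'I_2) \sum_(x : 'I_n)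
   ((x == (phi o.1 o.2).1) && true : nat).
  by apply: eq_bigr => o _; rewrite sum_eq_and.
rewrite exchange_big /=.
apply: (@leq_trans (\sum_(x : 'I_n) 3)); last by rewrite sum_nat_const card_ord mulnC.
apply: leq_sum => x _; have [H3 _ _] := inst x; apply: leq_trans H3.
rewrite -sum1_card [X in _ <= X]big_mkcond /=; apply: leq_sum => o _.
by rewrite inE andbT eq_sym.
Qed.

Lemma card_P : #|Tplayer n m| = 2 ^ nprime n.
Proof.
have H16 := np16 n; have Hm := m_le.
rewrite /Tplayer card_sum card_prod card_sum !card_ord /ndummies /padding; lia.
Qed.

Lemma opt_A_le : opt_A phi <= m.
Proof.
apply/bigmax_leqP => a _; apply: leq_trans (max_card _) _; by rewrite card_ord.
Qed.
End Counting.

Section Lower.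
Variables (n m : nat) (phi : 'I_m -> 'I_2 -> 'I_n * bool) (occ : 'I_m -> 'I_2 -> nat).
Hypothesis inst : max23sat_instance phi occ.
Variables (a : {ffun 'I_n -> bool}) (d0 : 'I_(ndummies n m)).
Hypothesis Hd : 7 * n <= ndummies n m.

Local Notation P := (Tplayer n m).
Local Notation rank := (@Trank n m).
Local Notation v := (Tvalue phi occ).

Definition dm k : P := inr (inr (insubd d0 k)).
Definition k0 c : 'I_2 := if a (phi c ord0).1 == (phi c ord0).2 then ord0 else ord_max.
Definition slotP (i : 'I_n) j c := (phi c (k0 c) == (i, a i)) && (occ c (k0 c) == j).
Definition slot i j : P :=
  if [pick c | slotP i j c] is Some c then cl n c else dm (7 * i + j.-1).
Definition Lit i := if a i then xT m i else xF m i.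
Definition Neg i := if a i then xF m i else xT m i.
Definition blk i := [:: Lit i; slot i 1; slot i 2; dm (7 * i + 3); slot i 3;
   dm (7 * i + 4); dm (7 * i + 5); dm (7 * i + 6)].
Definition Ab := flatten [seq blk i | i <- enum 'I_n].
Definition Bb := flatten [seq [:: xv m i; Neg i] | i <- enum 'I_n].
Definition rest := [seq p <- enum P | p \notin Ab ++ Bb].
Definition Ls := Ab ++ Bb ++ rest.

Definition pos j := if j == 3 then 4 else j.
Definition tbl := [:: 1; 2; 4; 3; 5; 6; 7].
Definition g (p : P) : nat :=
  match p with
  | inl (x, t) => if (t : nat) == 0 then 8 * n + 2 * x
                  else if ((t : nat) == 1) == a x then 8 * x else 8 * n + 2 * x + 1
  | inr (inl c) => 8 * (phi c (k0 c)).1 + pos (occ c (k0 c))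
  | inr (inr d) => 8 * (d %/ 7) + nth 0 tbl (d %% 7)
  end.

Lemma val_dm (i : 'I_n) k : k < 7 -> val (insubd d0 (7 * i + k)) = 7 * i + k.
Proof.
move=> Hk; rewrite val_insubd; case: ifP => // /negbT; rewrite -leqNgt.
have := ltn_ord i; lia.
Qed.

Lemma g_dm (i : 'I_n) k : k < 7 -> g (dm (7 * i + k)) = 8 * i + nth 0 tbl k.
Proof.
move=> Hk; rewrite /g /dm val_dm //.
have -> : (7 * i + k) %/ 7 = i by rewrite mulnC divnMDl // divn_small // addn0.
by rewrite [7 * i]mulnC modnMDl modn_small.
Qed.

Lemma slotP_k0 i j c : slotP i j c -> phi c (k0 c) = (i, a i) /\ occ c (k0 c) = j.
Proof. by case/andP => /eqP -> /eqP ->. Qed.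

Lemma g_slot (i : 'I_n) j : 1 <= j <= 3 -> g (slot i j) = 8 * i + pos j.
Proof.
move=> Hj; rewrite /slot; case: pickP => [c /slotP_k0 [E1 E2]|_].
  by rewrite /g /cl E1 E2.
rewrite g_dm; last by lia.
by case: j Hj => [|[|[|[|j]]]].
Qed.

Lemma map_g_blk (i : 'I_n) : map g (blk i) = iota (0 + 8 * i) 8.
Proof.
rewrite /blk !map_cons !g_slot // (@g_dm i 3) // (@g_dm i 4) // (@g_dm i 5) // (@g_dm i 6) //.
have -> : g (Lit i) = 8 * i by rewrite /Lit; case Ha: (a i); rewrite /g /xT /xF /= Ha.
by rewrite /pos /= add0n !addnS !addn0.
Qed.

Lemma map_g_B (i : 'I_n) : map g [:: xv m i; Neg i] = iota (8 * n + 2 * i) 2.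
Proof. by rewrite /Neg; case Ha: (a i); rewrite /= /xT /xF /xv /= Ha /= addn1. Qed.

Lemma map_g_A : map g Ab = iota 0 (8 * n).
Proof.
rewrite /Ab map_flatten -map_comp.
rewrite (eq_map (g := fun i : 'I_n => iota (0 + 8 * i) 8)); last by move=> i; exact: map_g_blk.
by rewrite (map_comp (fun i => iota (0 + 8 * i) 8) val) val_enum_ord flat_iota.
Qed.

Lemma map_g_Bb : map g Bb = iota (8 * n) (2 * n).
Proof.
rewrite /Bb map_flatten -map_comp.
rewrite (eq_map (g := fun i : 'I_n => iota (8 * n + 2 * i) 2)); last by move=> i; exact: map_g_B.
by rewrite (map_comp (fun i => iota (8 * n + 2 * i) 2) val) val_enum_ord flat_iota.
Qed.

Lemma uniq_AB : uniq (Ab ++ Bb).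
Proof.
apply: (@map_uniq _ _ g); rewrite map_cat map_g_A map_g_Bb -iotaD; exact: iota_uniq.
Qed.

Lemma size_A : size Ab = 8 * n.
Proof. by rewrite -(size_map g) map_g_A size_iota. Qed.

Lemma size_B : size Bb = 2 * n.
Proof. by rewrite -(size_map g) map_g_Bb size_iota. Qed.

Lemma uniq_Ls : uniq Ls.
Proof.
rewrite /Ls catA cat_uniq uniq_AB filter_uniq ?enum_uniq // andbT.
by apply/hasPn => p; rewrite mem_filter => /andP [].
Qed.

Lemma size_Ls : size Ls = #|P|.
Proof.
rewrite cardT; apply: perm_size; apply: uniq_perm; first exact: uniq_Ls.
  exact: enum_uniq.
move=> p; rewrite mem_enum /Ls catA mem_cat mem_filter mem_enum andbT.
by case: (p \in _).
Qed.


Lemma slot_cases i j : (exists c, slot i j = cl n c /\ slotP i j c) \/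
  ((forall c, ~~ slotP i j c) /\ slot i j = dm (7 * i + j.-1)).
Proof.
rewrite /slot; case: pickP => [c Hc | Hn]; first by left; exists c.
by right; split=> // c; rewrite Hn.
Qed.

Lemma rank_Lit i : rank (Lit i) < 3 * n.
Proof. by rewrite /Lit; case: (a i); apply: rank_lt_var. Qed.

Lemma rank_slot i j : 3 * n <= rank (slot i j).
Proof. by case: (slot_cases i j) => [[c [-> _]]|[_ ->]] /=; lia. Qed.

Lemma rank_dm k : 3 * n <= rank (dm k).
Proof. by rewrite /=; lia. Qed.

Lemma st_cl_dm c k : stronger rank (cl n c) (dm k) = cl n c.
Proof. by rewrite /stronger /=; have := ltn_ord c; case: ifP => //; lia. Qed.

Lemma st_dm k1 k2 : exists k, stronger rank (dm k1) (dm k2) = dm k.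
Proof. by rewrite /stronger; case: ifP => _; eexists. Qed.

Lemma v_lit_slot i j c : slotP i j c -> v (Lit i) (cl n c) j = 1.
Proof.
move=> /slotP_k0 [E1 E2]; rewrite /Tvalue /Lit.
case Ha: (a i); rewrite /= /xT /xF /=; apply/eqP; rewrite eqb1 ?orbF;
  apply/existsP; exists (k0 c); by rewrite E1 E2 Ha !eqxx.
Qed.

Lemma blk_ge i : \sum_(j < 3) ([exists c, slotP i j.+1 c] : nat) <=
  tourn_value_from rank v 3 1 (blk i).
Proof.
have HL := rank_Lit i.
apply: leq_trans (blk_val v _ _ _ _ _ _ _); last first.
- by apply: leq_trans (ltnW HL) (rank_dm _).
- by apply: leq_trans (ltnW HL) (rank_slot _ _).
- by apply: leq_trans (ltnW HL) (rank_slot _ _).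
rewrite !big_ord_recl big_ord0 addn0 addnA; apply: leq_add; first apply: leq_add.
- case: (slot_cases i 1) => [[c [-> Hc]]|[Hn _]]; first by rewrite (v_lit_slot Hc); case: existsP.
  by case: existsP => // -[c Hc]; rewrite (negbTE (Hn c)) in Hc.
- case: (slot_cases i 2) => [[c [-> Hc]]|[Hn _]].
    by rewrite st_cl_dm (v_lit_slot Hc); case: existsP.
  by case: existsP => // -[c Hc]; rewrite (negbTE (Hn c)) in Hc.
- case: (slot_cases i 3) => [[c [-> Hc]]|[Hn _]].
    have [k ->] := st_dm (7 * i + 5) (7 * i + 6).
    by rewrite !st_cl_dm (v_lit_slot Hc); case: existsP.
  by case: existsP => // -[c Hc]; rewrite (negbTE (Hn c)) in Hc.
Qed.


Hypothesis Hn : 0 < n.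

Lemma size_Ls2 : size Ls = 2 ^ nprime n.
Proof. rewrite size_Ls; exact: (card_P inst). Qed.

Lemma value_lb : n + \sum_(i < n) \sum_(j < 3) ([exists c, slotP i j.+1 c] : nat) <=
  tourn_value rank v (nprime n) Ls.
Proof.
rewrite /tourn_value -(subnKC (np3 Hn)) tv_split.
apply: leq_trans (leq_addr _ _).
rewrite /Ls tv_cat; last by rewrite size_A; apply: dvdn_mulr.
rewrite addnC; apply: leq_add.
  rewrite /Ab tv_flatten; last by apply/allP => b /mapP [i _ ->].
  rewrite big_map big_enum /=; apply: leq_sum => i _; exact: blk_ge.
apply: (@leq_trans (round_value v 1 (Bb ++ rest))); last by rewrite /=; lia.
rewrite rv_cat; last by rewrite size_B mul2n odd_double.
apply: leq_trans (leq_addr _ _).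
rewrite /round_value /Bb pairs_flat2 big_map.
rewrite -{1}(size_enum_ord n); apply: sum_seq_le => i /=.
by rewrite /Tvalue /Neg; case: (a i); rewrite /= !eqxx.
Qed.

Lemma sat_le : #|[set c | clause_sat phi a c]| <=
  \sum_(i < n) \sum_(j < 3) ([exists c, slotP i j.+1 c] : nat).
Proof.
rewrite -sum1_card big_mkcond /=.
apply: (@leq_trans (\sum_(i < n) \sum_c \sum_(j < 3) (slotP i j.+1 c : nat))).
  apply: sum_cover => c; rewrite inE; case Hs: (clause_sat phi a c) => //.
  have Hk : a (phi c (k0 c)).1 = (phi c (k0 c)).2.
    rewrite /k0; case: ifP => [/eqP //|H0].
    case/existsP: Hs => k.
    have : k = ord0 \/ k = ord_max.
      by case: k => [[|[|k]] Hk] //; [left|right]; apply: val_inj.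
    by case=> -> /eqP E //; rewrite E eqxx in H0.
  have Ep : phi c (k0 c) = ((phi c (k0 c)).1, a (phi c (k0 c)).1) by rewrite Hk -surjective_pairing.
  have /andP [H1 H3] := occ_bounds inst Ep.
  have Hj : (occ c (k0 c)).-1 < 3 by lia.
  apply: leq_trans (sum_pick _ (phi c (k0 c)).1).
  apply: leq_trans (sum_pick _ (Ordinal Hj)).
  by rewrite /slotP /= prednK // -Ep !eqxx.
apply: leq_sum => i _; rewrite exchange_big /=; apply: leq_sum => j _.
case: existsP => [[c1 Hc1]|Hn']; last first.
  by rewrite big1 // => c2 _; case Hc: (slotP _ _ _) => //; case: Hn'; exists c2.
apply: sum_le1 => c c' /slotP_k0 [E1 E2] /slotP_k0 [E1' E2'].
by have [] := occ_inj inst E1 E1' (etrans E2 (esym E2')).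
Qed.

End Lower.

Lemma tuple_seed (T : finType) (N : nat) (s : seq T) (H : size s == N) : uniq s ->
  exists f : {ffun 'I_N -> T}, injectiveb f && ([seq f i | i <- enum 'I_N] == s).
Proof.
move=> Hu; pose t := Tuple H; exists [ffun i => tnth t i]; apply/andP; split.
  apply/injectiveP => i j; rewrite !ffunE => E.
  move: E; rewrite (tnth_nth (tnth t i) t i) (tnth_nth (tnth t i) t j) => E.
  apply: val_inj; apply/eqP; rewrite -(nth_uniq (tnth t i) _ _ Hu).
  - by apply/eqP; exact: E.
  - by rewrite (eqP H) ltn_ord.
  - by rewrite (eqP H) ltn_ord.
apply/eqP; rewrite (eq_map (g := tnth t)) ?map_tnth_enum // => i; by rewrite ffunE.
Qed.

Theorem corollary1 (n m : nat) (phi : 'I_m -> 'I_2 -> 'I_n * bool)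
  (occ : 'I_m -> 'I_2 -> nat) :
  max23sat_instance phi occ ->
  opt_B phi occ = opt_A phi + n.
Proof.
move=> inst; apply/eqP; rewrite eqn_leq; apply/andP; split.
  apply/bigmax_leqP => s /injectiveP Hs; apply: upper => //.
  by rewrite map_inj_uniq ?enum_uniq.
case: (posnP n) => [Hn0|Hn].
  subst n; have Hm0 : m = 0.
    case: m phi {inst occ} => // m' phi'; by case: (phi' ord0 ord0) => -[].
  rewrite addn0; apply: leq_trans (opt_A_le phi) _.
  by apply: leq_trans (_ : m <= 0) (leq0n _); rewrite Hm0.
have Hm := m_le inst.
have Hd : 7 * n <= ndummies n m.
  have := np16 n; rewrite /ndummies /padding; lia.
have Hd0 : 0 < ndummies n m by lia.
pose d0 : 'I_(ndummies n m) := Ordinal Hd0.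
have [a Ea] : {a : {ffun 'I_n -> bool} | opt_A phi = #|[set c | clause_sat phi a c]|}.
  by apply: eq_bigmax; apply/card_gt0P; exists [ffun=> true].
rewrite Ea.
have HL : size (Ls phi occ a d0) == 2 ^ nprime n by rewrite size_Ls2.
have HU : uniq (Ls phi occ a d0) by apply: uniq_Ls.
have [f /andP [Hf /eqP Ef]] := tuple_seed HL HU.
apply: leq_trans (leq_bigmax_cond _ Hf).
rewrite Ef.
rewrite addnC; apply: leq_trans (value_lb phi occ a d0 Hd Hn); rewrite leq_add2l.
exact: (sat_le inst a Hd Hn).
Qed.
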